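(* Let $\mathscr{C}$ be any class of abstract monoids (closed under isomorphism), $\mathscr{A}$ an alphabet with $|\mathscr{A}| \geq 2$, and $k$ a positive integer. Let $p_n$ be the proportion of ordered monoid presentations over $\mathscr{A}$ with $k$ relations and sum relation length $n$ (respectively, maximum relation length $n$) which present monoids in $\mathscr{C}$, and let $q_n$ be the corresponding proportion of (unordered) monoid presentations over $\mathscr{A}$ with $k$ relations and sum (respectively, maximum) relation length $n$. Then $p_n - q_n \to 0$ as $n \to \infty$.
   Context: A monoid presentation $\langle \mathscr{A} \mid \mathscr{R} \rangle$ consists of an alphabet $\mathscr{A}$ and a set $\mathscr{R}$ of $k$ pairs of words over $\mathscr{A}$ (its relations); an ordered monoid presentation is the same except that $\mathscr{R}$ is a sequence of $k$ pairs of words. The monoid presented is $\mathscr{A}^*$ modulo the smallest congruence containing the relations. The sum relation length is the total length of all words forming sides of relations; the maximum relation length is the length of the longest such word. *)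

(* Defs.v *)
From mathcomp Require Import all_boot all_order all_algebra.
Set Implicit Arguments. Unset Strict Implicit. Unset Printing Implicit Defensive.
Import Order.TTheory GRing.Theory Num.Theory.
From Stdlib Require Import ClassicalEpsilon.

Definition asb (P : Prop) : bool :=
  if excluded_middle_informative P then true else false.

Record AbsMonoid := MkMonoid {
  mcarrier :> Type;
  mmul : mcarrier -> mcarrier -> mcarrier;
  mone : mcarrier;
  mmulA : forall x y z, mmul x (mmul y z) = mmul (mmul x y) z;
  mmul1l : forall x, mmul mone x = x;
  mmul1r : forall x, mmul x mone = x }.

Definition is_hom (M N : AbsMonoid) (f : M -> N) : Prop :=
  f (mone M) = mone N /\ forall x y, f (mmul x y) = mmul (f x) (f y).

Definition isomorphic (M N : AbsMonoid) : Prop :=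
  exists f : M -> N, is_hom f /\ bijective f.

Definition iso_closed (C : AbsMonoid -> Prop) : Prop :=
  forall M N : AbsMonoid, isomorphic M N -> C M -> C N.

Section Presentations.
Variable A : finType.

Definition word := seq A.
Definition relation := (word * word)%type.

Definition is_congruence (rho : word -> word -> Prop) : Prop :=
  [/\ forall u, rho u u,
      forall u v, rho u v -> rho v u,
      forall u v w, rho u v -> rho v w -> rho u w
    & forall u v x y, rho u v -> rho (x ++ u ++ y) (x ++ v ++ y)].

Definition cong_gen (R : seq relation) (u v : word) : Prop :=
  forall rho : word -> word -> Prop, is_congruence rho ->
    (forall r, r \in R -> rho r.1 r.2) -> rho u v.

(* M is (isomorphic to) the monoid presented by <A | R>, i.e. A^* / cong_gen R:
   there is a surjective monoid homomorphism A^* -> M whose kernel is cong_gen R. *)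
Definition presents (R : seq relation) (M : AbsMonoid) : Prop :=
  exists f : word -> M,
    [/\ f [::] = mone M,
        (forall u v, f (u ++ v) = mmul (f u) (f v)),
        (forall m : M, exists w, f w = m)
      & (forall u v, f u = f v <-> cong_gen R u v)].

Definition presents_in (C : AbsMonoid -> Prop) (R : seq relation) : Prop :=
  exists M : AbsMonoid, presents R M /\ C M.

Inductive len_kind := SumLen | MaxLen.

Definition pres_len (lk : len_kind) (R : seq relation) : nat :=
  match lk with
  | SumLen => \sum_(r <- R) (size r.1 + size r.2)
  | MaxLen => \max_(r <- R) maxn (size r.1) (size r.2)
  end.

(* Words of length at most n (finite type); any presentation of sum or
   maximum relation length n only involves such words. *)
Definition bword (n : nat) := {m : 'I_n.+1 & m.-tuple A}.
Definition bword_val n (w : bword n) : word := tval (tagged w).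
Definition brel (n : nat) := (bword n * bword n)%type.
Definition brel_val n (r : brel n) : relation := (bword_val r.1, bword_val r.2).

Definition opres_rels n k (t : k.-tuple (brel n)) : seq relation :=
  map (@brel_val n) t.
Definition upres_rels n (S : {set brel n}) : seq relation :=
  map (@brel_val n) (enum S).

Definition ordered_all (lk : len_kind) (k n : nat) : {set k.-tuple (brel n)} :=
  [set t : k.-tuple (brel n) | pres_len lk (opres_rels t) == n].
Definition ordered_in (C : AbsMonoid -> Prop) (lk : len_kind) (k n : nat)
  : {set k.-tuple (brel n)} :=
  [set t : k.-tuple (brel n) | (pres_len lk (opres_rels t) == n) && asb (presents_in C (opres_rels t))].

Definition unordered_all (lk : len_kind) (k n : nat) : {set {set brel n}} :=
  [set S : {set brel n} | (#|S| == k) && (pres_len lk (upres_rels S) == n)].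
Definition unordered_in (C : AbsMonoid -> Prop) (lk : len_kind) (k n : nat)
  : {set {set brel n}} :=
  [set S : {set brel n} | [&& #|S| == k, pres_len lk (upres_rels S) == n
              & asb (presents_in C (upres_rels S))]].

Definition p_prop C lk k n : rat :=
  (#|ordered_in C lk k n|%:R / #|ordered_all lk k n|%:R)%R.
Definition q_prop C lk k n : rat :=
  (#|unordered_in C lk k n|%:R / #|unordered_all lk k n|%:R)%R.

End Presentations.

(* Main.v *)
Require Import Defs.
From mathcomp Require Import all_boot all_order all_algebra all_fingroup.
From mathcomp Require Import zify.
From mathcomp Require Import ring lra.
From Stdlib Require Import ClassicalEpsilon.

Module Aux.
Set Implicit Arguments. Unset Strict Implicit. Unset Printing Implicit Defensive.

Section Bw.
Variables (A : finType) (a0 : A) (n : nat).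

Definition to_bword (w : word A) : bword A n :=
  Tagged (fun m : 'I_n.+1 => m.-tuple A) [tuple nth a0 w i | i < inord (size w)].

Lemma to_bwordK w : size w <= n -> bword_val (to_bword w) = w.
Proof.
move=> hw; rewrite /bword_val /to_bword /=.
rewrite (map_comp (nth a0 w) val) val_enum_ord inordK //.
exact: mkseq_nth.
Qed.

Lemma bword_val_inj : injective (@bword_val A n).
Proof.
move=> [m1 t1] [m2 t2]; rewrite /bword_val /= => e.
have em : m1 = m2 by apply: val_inj; rewrite /= -(size_tuple t1) -(size_tuple t2) e.
subst m2. congr Tagged. exact: val_inj.
Qed.

Lemma bword_size (w : bword A n) : size (bword_val w) <= n.
Proof. case: w => m t; rewrite /bword_val /= size_tuple; exact: (ltn_ord m). Qed.

Definition to_brel (r : relation A) : brel A n := (to_bword r.1, to_bword r.2).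

Lemma brel_val_inj : injective (@brel_val A n).
Proof.
move=> [u1 v1] [u2 v2]; rewrite /brel_val /= => [[/bword_val_inj -> /bword_val_inj ->]].
done.
Qed.

Definition okrel (r : relation A) := (size r.1 <= n) && (size r.2 <= n).

Lemma to_brelK r : okrel r -> brel_val (to_brel r) = r.
Proof. by case: r => u v /andP[hu hv]; rewrite /brel_val /= !to_bwordK. Qed.

Variable k : nat.
Definition mk (s : seq (relation A)) : k.-tuple (brel A n) :=
  [tuple to_brel (nth ([::],[::]) s i) | i < k].

Lemma mkK s : size s = k -> all okrel s -> opres_rels (mk s) = s.
Proof.
move=> hs ha; apply: (@eq_from_nth _ ([::],[::])).
  by rewrite /opres_rels size_map size_tuple.
rewrite /opres_rels size_map size_tuple => i hi.
rewrite (nth_map (to_brel ([::],[::]))) ?size_tuple //.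
rewrite -[i]/(nat_of_ord (Ordinal hi)) -tnth_nth tnth_mktuple /=.
apply: to_brelK; apply: (allP ha); apply: mem_nth; rewrite hs //.
Qed.

Lemma opres_inj : injective (@opres_rels A n k).
Proof.
move=> t1 t2 e; apply: val_inj; apply: (inj_map brel_val_inj); exact e.
Qed.

Lemma opres_size (t : k.-tuple (brel A n)) : size (opres_rels t) = k.
Proof. by rewrite /opres_rels size_map size_tuple. Qed.

Lemma opres_ok (t : k.-tuple (brel A n)) : all okrel (opres_rels t).
Proof.
apply/allP => r /mapP[b _ ->]; rewrite /okrel /brel_val /= !bword_size //.
Qed.

End Bw.

Lemma count_inj (X W P : finType) (B All : {set X}) (pat : X -> P) (f : X -> W -> X) :
 (forall x w, x \in B -> f x w \in All) ->
 (forall x1 w1 x2 w2, x1 \in B -> x2 \in B -> pat x1 = pat x2 ->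
     f x1 w1 = f x2 w2 -> x1 = x2 /\ w1 = w2) ->
 #|B| * #|W| <= #|P| * #|All|.
Proof.
move=> hA hI.
rewrite -cardsT -!cardsX.
set h := fun p : X * W => (pat p.1, f p.1 p.2).
have <- : #|[set h p | p in setX B [set: W]]| = #|setX B [set: W]|.
  apply/eqP/imset_injP => [[x1 w1] [x2 w2]]; rewrite !inE /= !andbT => h1 h2.
  rewrite /h /= => [[e1 e2]]; by case: (hI _ _ _ _ h1 h2 e1 e2) => -> ->.
rewrite -(cardsT P) -cardsX. apply: subset_leq_card; apply/subsetP => y /imsetP[[x w]]; rewrite !inE /= andbT => hx ->.
exact: hA.
Qed.

Section Ops.
Variable A : finType.
Notation rel := (relation A).
Definition d0 : rel := ([::],[::]).
Definition cmp (e : bool) (r : rel) := if e then r.1 else r.2.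
Definition upd (e : bool) (r : rel) (w : word A) : rel := if e then (w, r.2) else (r.1, w).

Lemma updK e r a b : upd e (upd e r a) b = upd e r b. Proof. by case: e. Qed.
Lemma cmp_upd e r a : cmp e (upd e r a) = a. Proof. by case: e. Qed.
Lemma cmp_updN e r a : cmp e (upd (~~ e) r a) = cmp e r. Proof. by case: e. Qed.
Lemma cmp_updN2 e r a : cmp (~~ e) (upd e r a) = cmp (~~ e) r. Proof. by case: e. Qed.
Lemma upd_cmp e r : upd e r (cmp e r) = r. Proof. by case: e; case: r. Qed.
Lemma sizeF e r : size r.1 + size r.2 = size (cmp e r) + size (cmp (~~e) r).
Proof. by case: e; rewrite /cmp /= // addnC. Qed.

Definition FS (r : rel) := size r.1 + size r.2.

Lemma sum_set_nth (s : seq rel) j y : j < size s ->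
  \sum_(r <- set_nth d0 s j y) FS r + FS (nth d0 s j) = \sum_(r <- s) FS r + FS y.
Proof.
elim: s j => [|x s IH] [|j] //= hj; rewrite !big_cons.
  lia.
have := IH j hj; lia.
Qed.

Lemma leq_sum_mem (s : seq rel) r : r \in s -> FS r <= \sum_(r <- s) FS r.
Proof.
elim: s => [|x s IH] //; rewrite in_cons big_cons => /orP[/eqP->|/IH]; lia.
Qed.

End Ops.
Arguments d0 {A}.

Section M.
Variables (A : finType) (a0 : A) (n k : nat).
Notation rel := (relation A).

Lemma all_set_nth (p : pred rel) (s : seq rel) j y :
  j < size s -> all p s -> p y -> all p (set_nth d0 s j y).
Proof.
elim: s j => [|x s IH] [|j] //= hj /andP[hx hs] hy; rewrite ?hx ?hs ?hy //=.
exact: IH.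
Qed.

Lemma size_set_nth' (s : seq rel) j y : j < size s -> size (set_nth d0 s j y) = size s.
Proof. by move=> hj; rewrite size_set_nth; apply/maxn_idPr. Qed.

Definition GM (r : rel) := maxn (size r.1) (size r.2).

Lemma max_ok (s : seq rel) : \max_(r <- s) GM r = n -> all (okrel n) s.
Proof.
move=> hm; apply/allP => r hr; have := @leq_bigmax_seq _ s xpredT GM r hr isT.
rewrite hm /okrel /GM geq_max //.
Qed.

Lemma sum_ok (s : seq rel) : \sum_(r <- s) FS r = n -> all (okrel n) s.
Proof.
move=> hm; apply/allP => r hr; have := leq_sum_mem hr.
rewrite hm /okrel /FS; lia.
Qed.

Definition opM (ij : 'I_k * 'I_k) (s : seq rel) (w : n.-tuple A) : seq rel :=
  set_nth d0 s ij.2 (tval w, (nth d0 s ij.2).2).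
Definition goodM (ij : 'I_k * 'I_k) (s : seq rel) :=
  (ij.1 != ij.2) && (nth d0 s ij.1 == nth d0 s ij.2).

Lemma opM_max ij s w : size s = k -> \max_(r <- s) GM r = n ->
  \max_(r <- opM ij s w) GM r = n.
Proof.
move=> hs hm; have hj : ij.2 < size s by rewrite hs.
have ok := max_ok hm.
apply/eqP; rewrite eqn_leq; apply/andP; split.
  apply/bigmax_leqP_seq => r hr _.
  have : all (okrel n) (opM ij s w).
    apply: all_set_nth => //; rewrite /okrel /= size_tuple leqnn /=.
    by have /andP[] := allP ok _ (mem_nth d0 hj).
  move/allP/(_ r hr); rewrite /okrel /GM geq_max //.
apply: (@bigmaxn_sup_seq _ _ (tval w, (nth d0 s ij.2).2)) => //.
  apply/(nthP d0); exists ij.2; first by rewrite size_set_nth' //.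
  by rewrite nth_set_nth /= eqxx.
by rewrite /GM /= size_tuple leq_maxl.
Qed.

Lemma opM_ok ij s w : size s = k -> all (okrel n) s -> all (okrel n) (opM ij s w).
Proof.
move=> hs ok; have hj : ij.2 < size s by rewrite hs.
apply: all_set_nth => //; rewrite /okrel /= size_tuple leqnn /=.
by have /andP[] := allP ok _ (mem_nth d0 hj).
Qed.

Lemma opM_size ij s w : size s = k -> size (opM ij s w) = k.
Proof. by move=> hs; rewrite size_set_nth' hs //; case: ij => i j /=. Qed.

Lemma opM_inv ij s w : size s = k -> goodM ij s ->
  set_nth d0 (opM ij s w) ij.2 (nth d0 (opM ij s w) ij.1) = s /\
  (nth d0 (opM ij s w) ij.2).1 = tval w.
Proof.
move=> hs /andP[hne /eqP he]; split; last by rewrite nth_set_nth /= eqxx.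
apply: (@eq_from_nth _ d0).
  by rewrite !size_set_nth' ?hs.
move=> p; rewrite !size_set_nth' ?hs // => hp.
rewrite /opM !nth_set_nth /=; case: eqP => [->|] //.
  by rewrite ifN // he.
by move=> /eqP hp2; rewrite nth_set_nth /= (negbTE hp2).
Qed.

End M.

Section S.
Variables (A : finType) (k S : nat).
Notation rel := (relation A).
Notation pat := ((('I_k * 'I_k) * 'I_k) * bool)%type.

Definition opS (p : pat) (s : seq rel) (x : 'I_S) : seq rel :=
  let i := p.1.1.1 in let j := p.1.1.2 in let g := p.1.2 in let e := p.2 in
  let u := cmp e (nth d0 s g) in
  let cut := size u - x in
  set_nth d0 (set_nth d0 s g (upd e (nth d0 s g) (take cut u))) j
     (upd (~~ e) (nth d0 s j) (cmp (~~ e) (nth d0 s j) ++ drop cut u)).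

Definition goodS (p : pat) (s : seq rel) :=
  let i := p.1.1.1 in let j := p.1.1.2 in let g := p.1.2 in let e := p.2 in
  [&& i != j, g != j, nth d0 s i == nth d0 s j & S <= size (cmp e (nth d0 s g))].

Definition invS (p : pat) (s' : seq rel) : seq rel * nat :=
  let i := p.1.1.1 in let j := p.1.1.2 in let g := p.1.2 in let e := p.2 in
  let r := upd e (nth d0 s' i) (cmp e (nth d0 s' j)) in
  let mv := drop (size (cmp (~~ e) r)) (cmp (~~ e) (nth d0 s' j)) in
  (set_nth d0 (set_nth d0 s' g (upd e (nth d0 s' g) (cmp e (nth d0 s' g) ++ mv))) j r,
   size mv).

Lemma opS_inv p s x : size s = k -> goodS p s -> invS p (opS p s x) = (s, nat_of_ord x).
Proof.
case: p => [[[i j] g] e] hs /and4P[hij hgj /eqP hsij hS] /=.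
rewrite /= in hij hgj hsij hS.
rewrite /invS /opS /=.
set u := cmp e (nth d0 s g).
set cut := size u - x.
have hx : x <= size u by apply: leq_trans (ltnW (ltn_ord x)) hS.
have hi : (i : nat) < size s by rewrite hs.
have hj : (j : nat) < size s by rewrite hs.
have hg : (g : nat) < size s by rewrite hs.
have hgj' : (g : nat) != j by [].
have hij' : (i : nat) != j by [].
set s1 := set_nth d0 s g _.
set nj := upd (~~ e) _ _.
set s' := set_nth d0 s1 j nj.
have s'j : nth d0 s' j = nj by rewrite /s' nth_set_nth /= eqxx.
have s'g : nth d0 s' g = upd e (nth d0 s g) (take cut u).
  by rewrite /s' nth_set_nth /= (negbTE hgj') /s1 nth_set_nth /= eqxx.
have s'i : upd e (nth d0 s' i) (cmp e (nth d0 s' j)) = nth d0 s j.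
  rewrite s'j /nj cmp_updN /s' nth_set_nth /= (negbTE hij') /s1 nth_set_nth /=.
  case: eqP => [eig|_]; first by rewrite -eig updK hsij upd_cmp.
  by rewrite hsij upd_cmp.
rewrite s'i s'j /nj.
have -> : cmp (~~ e) (upd (~~ e) (nth d0 s j) (cmp (~~ e) (nth d0 s j) ++ drop cut u))
   = cmp (~~ e) (nth d0 s j) ++ drop cut u by rewrite cmp_upd.
rewrite drop_size_cat // s'g cmp_upd cat_take_drop updK /u upd_cmp.
rewrite size_drop /cut; congr pair; last by rewrite -/u; lia.
apply: (@eq_from_nth _ d0).
  by rewrite !size_set_nth' // /s' ?size_set_nth' // /s1 size_set_nth'.
rewrite !size_set_nth' ?size_set_nth' // => q hq.
rewrite nth_set_nth /=; case: ifP => [/eqP -> //|qj].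
rewrite nth_set_nth /=; case: ifP => [/eqP -> //|qg].
by rewrite /s' nth_set_nth /= qj /s1 nth_set_nth /= qg.
Qed.

Lemma opS_sum p s x : size s = k -> goodS p s ->
  \sum_(r <- opS p s x) FS r = \sum_(r <- s) FS r.
Proof.
case: p => [[[i j] g] e] hs /and4P[hij hgj /eqP hsij hS].
rewrite /= in hij hgj hsij hS.
rewrite /opS /=.
set u := cmp e (nth d0 s g).
set cut := size u - x.
have hx : x <= size u by apply: leq_trans (ltnW (ltn_ord x)) hS.
have hj : (j : nat) < size s by rewrite hs.
have hg : (g : nat) < size s by rewrite hs.
have hgj' : (g : nat) != j by [].
set ng := upd e _ _.
set nj := upd (~~ e) _ _.
have h1 := sum_set_nth ng hg.
have hj1 : j < size (set_nth d0 s g ng) by rewrite size_set_nth'.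
have h2 := sum_set_nth nj hj1.
move: h2; rewrite nth_set_nth /= eq_sym (negbTE hgj') => h2.
move: h1 h2; rewrite /FS (sizeF e ng) (sizeF e nj) (sizeF e (nth d0 s g)) (sizeF e (nth d0 s j)).
have hc : cut <= size u by rewrite /cut; lia.
rewrite /ng /nj cmp_upd cmp_updN cmp_updN2 cmp_upd -/u size_cat (size_takel hc) size_drop.
lia.
Qed.

Lemma opS_size p s x : size s = k -> size (opS p s x) = k.
Proof.
case: p => [[[i j] g] e] hs; rewrite /opS /= size_set_nth' ?size_set_nth' ?hs //.
Qed.

End S.

Section T.
Variables (A : finType) (a0 : A) (k n : nat).
Notation X := (k.-tuple (brel A n)).

Definition Bd lk : {set X} := [set t in ordered_all A lk k n | ~~ uniq t].

Lemma bad_pair (t : X) : ~~ uniq t -> exists i j : 'I_k,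
  i != j /\ nth d0 (opres_rels t) i = nth d0 (opres_rels t) j.
Proof.
move=> hu.
have : ~~ uniq (opres_rels t) by rewrite /opres_rels (map_inj_uniq (@brel_val_inj A n)).
case/(uniqPn d0) => i [j [hij hj he]].
rewrite opres_size in hj.
have hi : i < k by apply: ltn_trans hij hj.
exists (Ordinal hi), (Ordinal hj); split => //.
by rewrite -(inj_eq val_inj) /= neq_ltn hij.
Qed.

Lemma bound_max : #|Bd MaxLen| * #|A| ^ n <= (k * k).+1 * #|ordered_all A MaxLen k n|.
Proof.
rewrite -card_tuple.
have -> : (k * k).+1 = #|{: option ('I_k * 'I_k)}| by rewrite card_option card_prod card_ord.
pose pat (t : X) := [pick ij : 'I_k * 'I_k | goodM ij (opres_rels t)].
pose f (t : X) (w : n.-tuple A) :=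
  if pat t is Some ij then mk a0 n k (opM ij (opres_rels t) w) else t.
have hpat : forall t, t \in Bd MaxLen -> exists ij, pat t = Some ij /\ goodM ij (opres_rels t).
  move=> t; rewrite inE => /andP[_ hu].
  rewrite /pat; case: pickP => [ij hij|none]; first by exists ij.
  case: (bad_pair hu) => i [j [hij he]].
  by have := none (i, j); rewrite /goodM /= hij he eqxx.
have hO : forall t, t \in Bd MaxLen -> pres_len MaxLen (opres_rels t) = n.
  by move=> t; rewrite !inE => /andP[/eqP].
have hf : forall t w ij, t \in Bd MaxLen -> pat t = Some ij ->
   opres_rels (f t w) = opM ij (opres_rels t) w.
  move=> t w ij ht e; rewrite /f e mkK //; first by rewrite opM_size // opres_size.
  apply: opM_ok; first exact: opres_size.
  exact: opres_ok.
apply: (count_inj (pat := pat) (f := f)).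
  move=> t w ht; have [ij [e hg]] := hpat t ht.
  rewrite inE (hf t w ij) //; apply/eqP; rewrite /pres_len opM_max //; first exact: opres_size.
  exact: hO.
move=> t1 w1 t2 w2 h1 h2 ep ef.
have [ij [e1 g1]] := hpat _ h1.
have e2 : pat t2 = Some ij by rewrite -ep.
have g2 : goodM ij (opres_rels t2) by have [ij' [e2' g2']] := hpat _ h2; move: e2; rewrite e2' => [[<-]].
have : opM ij (opres_rels t1) w1 = opM ij (opres_rels t2) w2 by rewrite -!hf // ef.
move=> eo.
have [i1 j1] := opM_inv w1 (opres_size t1) g1.
have [i2 j2] := opM_inv w2 (opres_size t2) g2.
split.
  by apply: opres_inj; rewrite -i1 -i2 eo.
move: j1; rewrite eo j2 => h; apply: val_inj; exact: (esym h).
Qed.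

Notation pat := ((('I_k * 'I_k) * 'I_k) * bool)%type.

Lemma exists_goodS (t : X) : 0 < k -> t \in Bd SumLen ->
  exists p : pat, goodS (n %/ (2 * k)) p (opres_rels t).
Proof.
move=> k0; rewrite !inE => /andP[/eqP hsum hu].
set S := n %/ (2 * k).
set s := opres_rels t.
have [i [j [hij he]]] := bad_pair hu.
case: (boolP [exists p : pat, goodS S p s]) => [/existsP//|/existsP none].
exfalso.
have hlt : forall (g : 'I_k) e, g != j -> size (cmp e (nth d0 s g)) < S.
  move=> g e hg; rewrite ltnNge; apply/negP => hS; apply: none; exists (i, j, g, e).
  by rewrite /goodS /= hij hg he eqxx hS.
have hS0 : 0 < S.
  by have := hlt i true hij; case: (S).
have hb : forall q : 'I_k, FS (nth d0 s q) <= 2 * (S - 1).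
  move=> q.
  have [g [hg eg]] : exists g : 'I_k, g != j /\ nth d0 s q = nth d0 s g.
    case: (eqVneq q j) => [->|hq]; first by exists i; rewrite he.
    by exists q.
  have h1 := hlt g true hg; have h2 := hlt g false hg.
  rewrite /FS eg; move: h1 h2; rewrite /cmp; lia.
have : \sum_(r <- s) FS r <= k * (2 * (S - 1)).
  rewrite (big_nth d0) big_mkord opres_size.
  apply: (@leq_trans (\sum_(q < k) 2 * (S - 1))); first by apply: leq_sum => q _; exact: hb q.
  by rewrite big_const_ord iter_addn_0 mulnC.
have hsum' : \sum_(r <- s) FS r = n by exact: hsum.
rewrite hsum'.
have := leq_divM n (2 * k); rewrite -/S.
nia.
Qed.

Lemma bound_sum : 0 < k ->
  #|Bd SumLen| * (n %/ (2 * k)) <= (k * k * k * 2).+1 * #|ordered_all A SumLen k n|.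
Proof.
move=> k0.
set S := n %/ (2 * k).
rewrite -[X in _ * X <= _](card_ord S).
have -> : (k * k * k * 2).+1 = #|{: option pat}| by rewrite card_option !card_prod !card_ord card_bool.
pose pt (t : X) := [pick p : pat | goodS S p (opres_rels t)].
pose f (t : X) (w : 'I_S) :=
  if pt t is Some p then mk a0 n k (opS p (opres_rels t) w) else t.
have hpat : forall t, t \in Bd SumLen -> exists p, pt t = Some p /\ goodS S p (opres_rels t).
  move=> t ht.
  rewrite /pt; case: pickP => [p hp|none]; first by exists p.
  by case: (exists_goodS k0 ht) => p; rewrite none.
have hO : forall t, t \in Bd SumLen -> pres_len SumLen (opres_rels t) = n.
  by move=> t; rewrite !inE => /andP[/eqP].
have hsum : forall t (w : 'I_S) (p : pat), t \in Bd SumLen -> goodS S p (opres_rels t) ->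
   \sum_(r <- opS p (opres_rels t) w) FS r = n.
  move=> t w p ht hg; rewrite (opS_sum w (opres_size t) hg); exact: hO.
have hf : forall t (w : 'I_S) (p : pat), t \in Bd SumLen -> pt t = Some p -> goodS S p (opres_rels t) ->
   opres_rels (f t w) = opS p (opres_rels t) w.
  move=> t w p ht e hg; rewrite /f e mkK //; first by rewrite opS_size // opres_size.
  apply: sum_ok; exact: hsum.
apply: (count_inj (pat := pt) (f := f)).
  move=> t w ht; have [p [e hg]] := hpat t ht.
  rewrite inE (hf t w p) //; apply/eqP; exact: hsum.
move=> t1 w1 t2 w2 h1 h2 ep ef.
have [p [e1 g1]] := hpat _ h1.
have e2 : pt t2 = Some p by rewrite -ep.
have g2 : goodS S p (opres_rels t2) by have [p' [e2' g2']] := hpat _ h2; move: e2; rewrite e2' => [[<-]].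
have eo : opS p (opres_rels t1) w1 = opS p (opres_rels t2) w2.
  by rewrite -(hf t1 w1 p) // -(hf t2 w2 p) // ef.
have := opS_inv w1 (opres_size t1) g1.
have := opS_inv w2 (opres_size t2) g2.
rewrite -eo => -> [e3 e4]; split; first exact: opres_inj.
exact: val_inj.
Qed.

End T.

Lemma fiber_card (T : finType) k (S : {set T}) : #|S| = k ->
  #|[set t : k.-tuple T | uniq t && ([set x in t] == S)]| = k`!.
Proof.
move=> hS.
have se : size (enum S) == k by rewrite -cardE hS.
pose e : k.-tuple T := Tuple se.
have ue : uniq e by exact: enum_uniq.
pose h (s : {perm 'I_k}) : k.-tuple T := [tuple tnth e (s i) | i < k].
have hinj : injective h.
  move=> s1 s2 eh; apply/permP => i.
  have : tnth (h s1) i = tnth (h s2) i by rewrite eh.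
  rewrite !tnth_mktuple; exact: (tuple_uniqP e ue).
have -> : [set t : k.-tuple T | uniq t && ([set x in t] == S)] = [set h s | s in setT].
  apply/setP => t; rewrite inE; apply/andP/imsetP.
    move=> [ut /eqP ht].
    have pe : perm_eq t e.
      apply: uniq_perm => // x; rewrite /e /= mem_enum -ht inE //.
    have [s hs] := tuple_permP pe.
    by exists s; rewrite ?inE //; apply: val_inj; rewrite /= hs.
  move=> [s _ ->].
  have pe : perm_eq (h s) e by apply/tuple_permP; exists s.
  split; first by rewrite (perm_uniq pe).
  apply/eqP/setP => x; rewrite inE (perm_mem pe) /e /= mem_enum //.
by rewrite card_imset // cardsT card_Sn.
Qed.

Lemma count_uniq (T : finType) k (U' : {set {set T}}) : (forall S, S \in U' -> #|S| = k) ->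
  #|[set t : k.-tuple T | uniq t && ([set x in t] \in U')]| = k`! * #|U'|.
Proof.
move=> hU.
rewrite -sum1_card (partition_big (fun t : k.-tuple T => [set x in t]) (mem U')) /=; last first.
  by move=> t; rewrite inE => /andP[].
rewrite [RHS]mulnC -sum_nat_const.
apply: eq_bigr => S hSU.
rewrite -(fiber_card (hU S hSU)) -sum1_card; apply: eq_bigl => t.
rewrite !inE; case: (uniq t) => //=.
by case: eqP => [->|]; rewrite ?hSU ?andbF ?andbT.
Qed.

Lemma asb_iff (P Q : Prop) : (P <-> Q) -> asb P = asb Q.
Proof.
move=> [h1 h2]; rewrite /asb.
case: excluded_middle_informative => hp; case: excluded_middle_informative => hq //.
- by case: hq; apply: h1.
- by case: hp; apply: h2.
Qed.

Section U.
Variables (A : finType) (C : AbsMonoid -> Prop) (lk : len_kind) (k n : nat).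
Notation X := (k.-tuple (brel A n)).

Lemma cong_gen_eq (R1 R2 : seq (relation A)) u v : R1 =i R2 -> cong_gen R1 u v <-> cong_gen R2 u v.
Proof.
move=> e; split => h rho hc hr; apply: h => // r hr'; apply: hr; by rewrite ?e // -e.
Qed.

Lemma presents_in_eq (R1 R2 : seq (relation A)) : R1 =i R2 ->
  asb (presents_in C R1) = asb (presents_in C R2).
Proof.
move=> e; apply: asb_iff.
have H : forall R1 R2 : seq (relation A), R1 =i R2 -> presents_in C R1 -> presents_in C R2.
  move=> S1 S2 e' [M [[f [f1 f2 f3 f4]] hC]]; exists M; split => //; exists f; split => //.
  move=> u v; rewrite f4; exact: cong_gen_eq.
split; apply: H => // x; by rewrite e.
Qed.

Lemma pres_len_perm (s1 s2 : seq (relation A)) : perm_eq s1 s2 -> pres_len lk s1 = pres_len lk s2.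
Proof. by case: lk => pe /=; apply: perm_big. Qed.

Lemma perm_rels (t : X) : uniq t -> perm_eq (opres_rels t) (upres_rels [set x in t]).
Proof.
move=> ut; apply: perm_map; apply: uniq_perm => //; first exact: enum_uniq.
by move=> x; rewrite mem_enum inE.
Qed.

Lemma card_set_uniq (t : X) : uniq t -> #|[set x in t]| = k.
Proof. by move=> ut; rewrite cardsE (card_uniqP ut) size_tuple. Qed.

Lemma D_eq : [set t in ordered_all A lk k n | uniq t] =
  [set t : X | uniq t && ([set x in t] \in unordered_all A lk k n)].
Proof.
apply/setP => t; rewrite !inE; case ut: (uniq t); rewrite ?andbF //= andbT.
by rewrite card_set_uniq // eqxx /= (pres_len_perm (perm_rels ut)).
Qed.

Lemma DC_eq : [set t in ordered_in A C lk k n | uniq t] =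
  [set t : X | uniq t && ([set x in t] \in unordered_in A C lk k n)].
Proof.
apply/setP => t; rewrite !inE; case ut: (uniq t); rewrite ?andbF //= andbT.
rewrite card_set_uniq // eqxx /= (pres_len_perm (perm_rels ut)).
by rewrite (presents_in_eq (perm_mem (perm_rels ut))).
Qed.

Lemma card_D : #|[set t in ordered_all A lk k n | uniq t]| = k`! * #|unordered_all A lk k n|.
Proof.
rewrite D_eq count_uniq // => S; rewrite inE => /andP[/eqP -> _] //.
Qed.

Lemma card_DC : #|[set t in ordered_in A C lk k n | uniq t]| = k`! * #|unordered_in A C lk k n|.
Proof.
rewrite DC_eq count_uniq // => S; rewrite inE => /and3P[/eqP -> _] //.
Qed.

End U.

Import Order.TTheory GRing.Theory Num.Theory.
Section RatSec.
Local Open Scope ring_scope.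

Lemma key_ineq (a b c d f : rat) : 0 <= a -> 0 <= c -> 0 <= f -> 0 < d -> b = d + f -> a <= c + f -> c <= a -> c <= d ->
  `|a * d - c * b| <= f * d.
Proof.
move=> ha hc hf hd hb h1 h2 h3; rewrite hb ler_norml; apply/andP; split; nra.
Qed.

Lemma ratio_bound (a b c d f : nat) : b = (d + f)%N -> (a <= c + f)%N -> (c <= a)%N -> (c <= d)%N ->
  `|a%:R / b%:R - c%:R / d%:R| <= f%:R / b%:R :> rat.
Proof.
move=> hb h1 h2 h3.
have [d0|dpos] := posnP d.
  have c0 : c = 0%N by apply/eqP; rewrite -leqn0 -d0.
  rewrite d0 c0 mul0r subr0 normrM normr_nat.
  rewrite ger0_norm ?invr_ge0 ?ler0n //.
  by apply: ler_wpM2r; rewrite ?invr_ge0 ?ler0n // ler_nat; move: h1; rewrite c0 add0n.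
have bpos : (0 < b)%N by rewrite hb; apply: leq_trans dpos (leq_addr _ _).
have hbR : (0 : rat) < b%:R by rewrite ltr0n.
have hdR : (0 : rat) < d%:R by rewrite ltr0n.
have e : a%:R / b%:R - c%:R / d%:R = (a%:R * d%:R - c%:R * b%:R) / (b%:R * d%:R) :> rat.
  by field; rewrite ?pnatr_eq0 -?lt0n ?bpos ?dpos.
rewrite e normrM (ger0_norm (x := (b%:R * d%:R)^-1)); last by rewrite invr_ge0 mulr_ge0 // ltW.
have -> : f%:R / b%:R = f%:R * d%:R / (b%:R * d%:R) :> rat.
  by field; rewrite ?pnatr_eq0 -?lt0n ?bpos ?dpos.
apply: ler_wpM2r; first by rewrite invr_ge0 mulr_ge0 // ltW.
apply: key_ineq; rewrite ?ler0n //.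
- by rewrite hb natrD.
- by rewrite -natrD ler_nat.
- by rewrite ler_nat.
- by rewrite ler_nat.
Qed.

End RatSec.
End Aux.
Import Aux.
Import Order.TTheory GRing.Theory Num.Theory.

Lemma divKc (c x y : nat) : c != 0%N ->
  ((c * x)%:R / (c * y)%:R = x%:R / y%:R :> rat)%R.
Proof.
move=> hc; rewrite !natrM invfM mulrACA mulfV ?mul1r //.
by rewrite pnatr_eq0.
Qed.

Theorem theorem7 (A : finType) (C : AbsMonoid -> Prop) (k : nat) (lk : len_kind) :
  iso_closed C -> 1 < #|A| -> 0 < k ->
  forall eps : rat, (0 < eps)%R ->
  exists N : nat, forall n : nat, N <= n ->
    (`|p_prop A C lk k n - q_prop A C lk k n| < eps)%R.
Proof.
move=> _ hA k0 eps heps.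
have [a0 _] : exists a0 : A, a0 \in A by apply/card_gt0P; apply: ltnW.
have [P hP] : exists P, forall n, #|Bd A k n lk| * (n %/ (2 * k)) <= P * #|ordered_all A lk k n|.
  case: lk.
    exists (k * k * k * 2).+1 => n; have H := bound_sum a0 n k0; exact H.
  exists (k * k).+1 => n; apply: leq_trans _ (bound_max a0 k n); rewrite leq_mul2l; apply/orP; right.
  apply: leq_trans (leq_div _ _) _; apply: ltnW; apply: leq_trans (ltn_expl n (isT : 1 < 2)) _.
  by elim: (n) => // m IH; rewrite !expnS leq_mul.
set M0 := Num.Def.archi_bound (P%:R / eps)%R.
have hM0 : (P%:R / eps < M0%:R :> rat)%R by apply: archi_boundP; rewrite divr_ge0 // ltW.
exists (2 * k * M0.+1) => n hn.
set M := n %/ (2 * k).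
have hM : M0 < M.
  have := leq_div2r (2 * k) hn; rewrite mulKn //; lia.
rewrite /p_prop /q_prop.
rewrite -(@divKc k`! #|unordered_in A C lk k n|) ?fact_gt0 -?lt0n ?fact_gt0 //.
rewrite -card_D -card_DC.
set O := ordered_all A lk k n.
set OC := ordered_in A C lk k n.
set D := [set t in O | uniq t].
set DC := [set t in OC | uniq t].
have OCO : OC \subset O.
  by apply/subsetP => t; rewrite !inE => /andP[].
have hb : #|O| = #|D| + #|Bd A k n lk|.
  rewrite -(cardsID [set t : k.-tuple (brel A n) | uniq t] O); congr (_ + _); apply: eq_card => t;
  by rewrite /D /Bd !inE /= // andbC.
have ha : #|OC| <= #|DC| + #|Bd A k n lk|.
  rewrite -(cardsID [set t : k.-tuple (brel A n) | uniq t] OC).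
  have -> : #|OC :&: [set t : k.-tuple (brel A n) | uniq t]| = #|DC| by apply: eq_card => t; rewrite /DC !inE andbC.
  rewrite leq_add2l; apply: subset_leq_card; apply/subsetP => t.
  by rewrite /Bd !inE => /andP[hu /andP[-> _]].
have hc : #|DC| <= #|OC|.
  by apply: subset_leq_card; apply/subsetP => t; rewrite /DC inE => /andP[].
have hd : #|DC| <= #|D|.
  by apply: subset_leq_card; apply/subsetP => t; rewrite /DC /D !inE => /andP[/andP[-> _] ->].
apply: le_lt_trans (ratio_bound hb ha hc hd) _.
have [b0|bpos] := posnP #|O|.
  by rewrite b0 invr0 mulr0.
have hMpos : (0 < M)%N by lia.
apply: (@le_lt_trans _ _ (P%:R / M%:R)%R).
  rewrite ler_pdivrMr ?ltr0n // mulrAC ler_pdivlMr ?ltr0n // -!natrM ler_nat.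
  exact: hP.
rewrite ltr_pdivrMr ?ltr0n //.
have : (P%:R < eps * M0%:R :> rat)%R by rewrite mulrC -ltr_pdivrMr.
move=> h; apply: lt_le_trans h _; apply: ler_wpM2l; [exact: ltW | rewrite ler_nat; exact: ltnW].
Qed.
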